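(* In the fixed-routing setting, let $y=[y_i(k)]_{k\in\mathcal C,\,i\notin\mathcal S_k}\in[0,1]^{n}$, and define $$A(y)=T(\mathbf 0)-\sum_{(i,j)\in\mathcal E}D_{ij}(F_{ij}(y)),\qquad B(y)=\sum_{i\in\mathcal V}B_i(Y_i),$$ where $T(\mathbf 0)=\sum_{(i,j)}D_{ij}(F_{ij}(\mathbf 0))$ is assumed finite. Then $A$ is nonnegative, monotonically nondecreasing and DR-submodular on $[0,1]^n$, and $B$ is convex. Hence maximizing $G(y)=A(y)-B(y)$ over $[0,1]^n$ is a ''DR-submodular + concave'' maximization problem.
   Context: Network model: finite directed graph $(\mathcal V,\mathcal E)$ with symmetric links, finite catalog $\mathcal C$, designated server sets $\mathcal S_k\neq\emptyset$, exogenous request rates $r_v(k)\ge0$; each $D_{ij}$, $B_i$ is twice continuously differentiable, increasing, convex, with value $0$ at $0$; $Y_i=\sum_k y_i(k)$. Fixed routing: for each $k$ and each $i\notin\mathcal S_k$ there is a fixed next hop $j_i(k)\in\mathcal N(i)$. For each $v$ and $k$, the path $p_{vk}=(p^1_{vk},\dots,p^{|p_{vk}|}_{vk})$ is defined by $p^1_{vk}=v$, $p^{l+1}_{vk}=j_{p^l_{vk}}(k)$, ending at a node $s_k\in\mathcal S_k$; every such path is assumed loop-free with no intermediate node in $\mathcal S_k$. $(i,j)\in p_{vk}$ means $i,j$ are consecutive on $p_{vk}$; $l_{p_{vk}}(i)$ is the position of $i$ on $p_{vk}$. The link flows are $$f_{ji}(k)=\sum_{v:(i,j)\in p_{vk}}r_v(k)\prod_{l'=1}^{l_{p_{vk}}(i)}\big(1-y_{p^{l'}_{vk}}(k)\big),\qquad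 F_{ji}=\sum_k f_{ji}(k).$$ A function $A$ on a box $[0,1]^n$ is DR-submodular if for all $a\le b$ (coordinatewise), every coordinate vector $e_m$ and every $\epsilon\ge0$ with $a+\epsilon e_m,b+\epsilon e_m$ in the box, $A(a+\epsilon e_m)-A(a)\ge A(b+\epsilon e_m)-A(b)$ (for twice differentiable $A$, equivalently all second partial derivatives are $\le 0$). *)

(* Defs.v *)
From HB Require Import structures.
From mathcomp Require Import all_boot all_order all_algebra.
From mathcomp Require Import all_classical all_reals all_analysis.
Unset Printing Implicit Defensive.
Import Order.TTheory GRing.Theory Num.Theory.
Import numFieldNormedType.Exports.
Local Open Scope classical_set_scope.
Local Open Scope ring_scope.

Section Network.
Variable R : realType.

Definition C2_nonneg (f : R -> R) : Prop :=
  forall x : R, 0 <= x ->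
    [/\ derivable f x 1, derivable (derive1 f) x 1 & {for x, continuous (derive1 (derive1 f))}].
Definition incr_nonneg (f : R -> R) : Prop :=
  forall x y : R, 0 <= x -> x <= y -> f x <= f y.
Definition convex_nonneg (f : R -> R) : Prop :=
  forall x y t : R, 0 <= x -> 0 <= y -> 0 <= t -> t <= 1 ->
    f (t * x + (1 - t) * y) <= t * f x + (1 - t) * f y.
Definition cost_fun (f : R -> R) : Prop :=
  [/\ C2_nonneg f, incr_nonneg f, convex_nonneg f & f 0 = 0].

Section Box.
Variable I : finType.
Definition inbox (y : I -> R) : Prop := forall m, 0 <= y m <= 1.
Definition vle (a b : I -> R) : Prop := forall m, a m <= b m.
Definition addcoord (a : I -> R) (m : I) (eps : R) : I -> R :=
  fun m' => a m' + (if m' == m then eps else 0).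
Definition nonneg_on_box (A : (I -> R) -> R) : Prop :=
  forall y, inbox y -> 0 <= A y.
Definition nondecr_on_box (A : (I -> R) -> R) : Prop :=
  forall a b, inbox a -> inbox b -> vle a b -> A a <= A b.
Definition DR_submodular (A : (I -> R) -> R) : Prop :=
  forall a b, inbox a -> inbox b -> vle a b ->
  forall (m : I) (eps : R), 0 <= eps ->
    inbox (addcoord a m eps) -> inbox (addcoord b m eps) ->
    A (addcoord b m eps) - A b <= A (addcoord a m eps) - A a.
Definition convex_on_box (B : (I -> R) -> R) : Prop :=
  forall a b (t : R), inbox a -> inbox b -> 0 <= t -> t <= 1 ->
    B (fun m => t * a m + (1 - t) * b m) <= t * B a + (1 - t) * B b.
End Box.

Variables (V C : finType) (E : rel V) (S : C -> {set V}) (nh : C -> V -> V)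
          (r : V -> C -> R).

Definition Idx := {p : (C * V)%type | p.2 \notin S p.1}.

(* number of hops of p_{vk}: first n with (nh k)^n v \in S_k *)
Definition plen (k : C) (v : V) : nat :=
  find (fun n => iter n (nh k) v \in S k) (iota 0 #|V|).
(* the path p_{vk} = (p^1, ..., p^{|p|}) as a sequence (0-based) *)
Definition pth (k : C) (v : V) : seq V := traject (nh k) v (plen k v).+1.

(* y_i(k), extended by 0 at server pairs (never used there) *)
Definition yext (y : Idx -> R) (k : C) (i : V) : R :=
  if @insub _ (fun p : C * V => p.2 \notin S p.1) Idx (k, i) is Some m
  then y m else 0.

(* f_{ji}(k): (i,j) \in p_{vk} iff (i,j) consecutive on p_{vk};
   l_{p}(i) = index i p + 1 *)
Definition flow (y : Idx -> R) (j i : V) (k : C) : R :=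
  \sum_(v : V)
    (if (i, j) \in zip (pth k v) (behead (pth k v)) then
       r v k * \prod_(l < (index i (pth k v)).+1)
                 (1 - yext y k (nth v (pth k v) l))
     else 0).
Definition Ftot (y : Idx -> R) (j i : V) : R := \sum_(k : C) flow y j i k.

Definition yzero : Idx -> R := fun _ => 0.

Definition Tcost (D : V -> V -> R -> R) (y : Idx -> R) : R :=
  \sum_(e : V * V | E e.1 e.2) D e.1 e.2 (Ftot y e.1 e.2).

Definition Aobj (D : V -> V -> R -> R) (y : Idx -> R) : R :=
  Tcost D yzero - Tcost D y.

Definition Ycache (y : Idx -> R) (i : V) : R :=
  \sum_(m : Idx | (val m).2 == i) y m.

Definition Bobj (Bc : V -> R -> R) (y : Idx -> R) : R :=
  \sum_(i : V) Bc i (Ycache y i).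

End Network.

(* Main.v *)
Require Import Defs.
From HB Require Import structures.
From mathcomp Require Import all_boot all_order all_algebra.
From mathcomp Require Import all_classical all_reals all_analysis.
From mathcomp Require Import ring lra.
Import Order.TTheory GRing.Theory Num.Theory.
Local Open Scope ring_scope.

Section Aux.
Variable R : realType.

Lemma incr_convex (f : R -> R) : convex_nonneg R f ->
  forall x y d, 0 <= x -> x <= y -> 0 <= d -> f (x + d) - f x <= f (y + d) - f y.
Proof.
move=> cf x y d x0 xy d0.
have [->|dn0] := eqVneq d 0; first by rewrite !addr0 !subrr.
have dp : 0 < d by rewrite lt_def dn0 d0.
have hp : 0 < y + d - x by lra.
have hn : y + d - x != 0 by rewrite gt_eqF.
set t := d / (y + d - x).
have t0 : 0 <= t by apply: divr_ge0; lra.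
have t1 : t <= 1 by rewrite /t ler_pdivrMr //; lra.
have e1 : t * x + (1 - t) * (y + d) = y by rewrite /t; field.
have e2 : (1 - t) * x + (1 - (1 - t)) * (y + d) = x + d by rewrite /t; field.
have h1 := cf x (y + d) t x0 ltac:(lra) t0 t1.
have h2 := cf x (y + d) (1 - t) x0 ltac:(lra) ltac:(lra) ltac:(lra).
rewrite e1 in h1; rewrite e2 in h2.
rewrite (_ : 1 - (1 - t) = t) in h2; last by ring.
nra.
Qed.

Lemma prod_ge0' n (z : nat -> R) : (forall l, z l <= 1) -> 0 <= \prod_(l < n) (1 - z l).
Proof. by move=> h; apply: prodr_ge0 => i _; rewrite subr_ge0. Qed.

Lemma prod_mono n (za zb : nat -> R) : (forall l, zb l <= 1) -> (forall l, za l <= zb l) ->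
  \prod_(l < n) (1 - zb l) <= \prod_(l < n) (1 - za l).
Proof.
move=> hb hab; apply: ler_prod => i _.
have := hb i; have := hab i; move=> ? ?; apply/andP; split; lra.
Qed.

Lemma prod_DR n (za zb za' zb' : nat -> R) :
  (forall l, 0 <= za l <= 1) -> (forall l, 0 <= zb l <= 1) ->
  (forall l, 0 <= za' l <= 1) -> (forall l, 0 <= zb' l <= 1) ->
  (forall l, za l <= zb l) -> (forall l, za l <= za' l) ->
  (forall l, za' l - za l = zb' l - zb l) ->
  \prod_(l < n) (1 - zb l) - \prod_(l < n) (1 - zb' l) <=
  \prod_(l < n) (1 - za l) - \prod_(l < n) (1 - za' l).
Proof.
elim: n za zb za' zb' => [|n IH] za zb za' zb' ha hb ha' hb' hab haa' hd.
  by rewrite !big_ord0 !subrr.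
have sh : forall z : nat -> R, \prod_(i < n) (1 - z (lift ord0 i)) = \prod_(i < n) (1 - z i.+1).
  by move=> z; apply: eq_bigr => i _; rewrite lift0.
rewrite !big_ord_recl !sh.
have := IH (fun l => za l.+1) (fun l => zb l.+1) (fun l => za' l.+1) (fun l => zb' l.+1)
  (fun l => ha l.+1) (fun l => hb l.+1) (fun l => ha' l.+1) (fun l => hb' l.+1)
  (fun l => hab l.+1) (fun l => haa' l.+1) (fun l => hd l.+1).
set Qa := \prod_(i < n) (1 - za i.+1).
set Qb := \prod_(i < n) (1 - zb i.+1).
set Qa' := \prod_(i < n) (1 - za' i.+1).
set Qb' := \prod_(i < n) (1 - zb' i.+1).
move=> hIH.
have hbb' : Qb' <= Qb.
  apply: (@prod_mono n (fun l => zb l.+1) (fun l => zb' l.+1)) => l; [by case/andP: (hb' l.+1) | by have := hd l.+1; have := haa' l.+1; lra].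
have hab' : Qb' <= Qa'.
  apply: (@prod_mono n (fun l => za' l.+1) (fun l => zb' l.+1)) => l; [by case/andP: (hb' l.+1) | by have := hd l.+1; have := hab l.+1; lra].
have hb0 : 0 <= Qb' by apply: (@prod_ge0' n (fun l => zb' l.+1)) => l; case/andP: (hb' l.+1).
have := ha (ord0 : 'I_n.+1); have := hb (ord0 : 'I_n.+1); have := ha' (ord0 : 'I_n.+1).
have := hab (ord0 : 'I_n.+1); have := haa' (ord0 : 'I_n.+1); have := hd (ord0 : 'I_n.+1).
rewrite /=.
move=> e1 e2 e3 /andP[e4 e5] /andP[e6 e7] /andP[e8 e9].
have p1 : 0 <= (zb 0 - za 0) * (Qb - Qb') by apply: mulr_ge0; lra.
have p2 : 0 <= (1 - za 0) * ((Qa - Qa') - (Qb - Qb')) by apply: mulr_ge0; lra.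
have p3 : 0 <= (za' 0 - za 0) * (Qa' - Qb') by apply: mulr_ge0; lra.
have -> : zb' 0 = zb 0 + za' 0 - za 0 by lra.
nra.
Qed.


Lemma D_DR (f : R -> R) : cost_fun R f -> forall Fa Fb Fa' Fb' : R,
  0 <= Fb' -> Fb' <= Fa' -> Fb' <= Fb -> Fa' <= Fa -> Fb - Fb' <= Fa - Fa' ->
  f Fb - f Fb' <= f Fa - f Fa'.
Proof.
case=> _ inc cvx _ Fa Fb Fa' Fb' h0 h1 h2 h3 h4.
have := @incr_convex f cvx Fb' Fa' (Fb - Fb') h0 h1 ltac:(lra).
rewrite (_ : Fb' + (Fb - Fb') = Fb); last by ring.
have := inc (Fa' + (Fb - Fb')) Fa ltac:(lra) ltac:(lra).
lra.
Qed.

Section Net.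
Variables (V C : finType) (S : C -> {set V}) (nh : C -> V -> V) (r : V -> C -> R).
Hypothesis hr : forall v k, 0 <= r v k.
Let I := Idx V C S.

Lemma yext_box (y : I -> R) k i : inbox R I y -> 0 <= yext R V C S y k i <= 1.
Proof. by rewrite /yext => hy; case: insub => [m|] //; rewrite lexx ler01. Qed.

Lemma yext_mono (a b : I -> R) k i : vle R I a b -> yext R V C S a k i <= yext R V C S b k i.
Proof. by rewrite /yext => hab; case: insub => [m|] //. Qed.

Lemma yext_add (a : I -> R) m eps k i :
  yext R V C S (addcoord R I a m eps) k i - yext R V C S a k i =
  (if insub (k, i) is Some m' then (if m' == m then eps else 0) else 0 : R).
Proof. by rewrite /yext /addcoord; case: insub => [m'|]; rewrite ?subrr // addrC addKr. Qed.

Lemma flow_ge0 (y : I -> R) j i k : inbox R I y -> 0 <= flow R V C S nh r y j i k.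
Proof.
move=> hy; apply: sumr_ge0 => v _; case: ifP => // _.
apply: mulr_ge0 => //; apply: (@prod_ge0' _ (fun l => yext R V C S y k (nth v (pth V C S nh k v) l))) => l.
by case/andP: (yext_box y k (nth v (pth V C S nh k v) l) hy).
Qed.

Lemma flow_mono (a b : I -> R) j i k : inbox R I a -> inbox R I b -> vle R I a b ->
  flow R V C S nh r b j i k <= flow R V C S nh r a j i k.
Proof.
move=> ha hb hab; apply: ler_sum => v _; case: ifP => // _.
apply: ler_wpM2l => //; apply: (@prod_mono _ (fun l => yext R V C S a k (nth v (pth V C S nh k v) l)) (fun l => yext R V C S b k (nth v (pth V C S nh k v) l))) => l.
  by case/andP: (yext_box b k (nth v (pth V C S nh k v) l) hb).
exact: yext_mono.
Qed.

Lemma flow_DR (a b : I -> R) m eps j i k : inbox R I a -> inbox R I b -> vle R I a b ->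
  0 <= eps -> inbox R I (addcoord R I a m eps) -> inbox R I (addcoord R I b m eps) ->
  flow R V C S nh r b j i k - flow R V C S nh r (addcoord R I b m eps) j i k <=
  flow R V C S nh r a j i k - flow R V C S nh r (addcoord R I a m eps) j i k.
Proof.
move=> ha hb hab he ha' hb'; rewrite /flow -!sumrB; apply: ler_sum => v _.
case: ifP => _; last by rewrite !subrr.
rewrite -!mulrBr; apply: ler_wpM2l => //.
set p := pth V C S nh k v.
apply: (@prod_DR _ (fun l => yext R V C S a k (nth v p l)) (fun l => yext R V C S b k (nth v p l))
  (fun l => yext R V C S (addcoord R I a m eps) k (nth v p l))
  (fun l => yext R V C S (addcoord R I b m eps) k (nth v p l))) => l.
- exact: yext_box.
- exact: yext_box.
- exact: yext_box.
- exact: yext_box.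
- exact: yext_mono.
- rewrite -subr_ge0 yext_add; case: insub => [m'|] //; by case: eqP.
- by rewrite !yext_add.
Qed.

Lemma Ftot_ge0 (y : I -> R) j i : inbox R I y -> 0 <= Ftot R V C S nh r y j i.
Proof. by move=> hy; apply: sumr_ge0 => k _; apply: flow_ge0. Qed.

Lemma Ftot_mono (a b : I -> R) j i : inbox R I a -> inbox R I b -> vle R I a b ->
  Ftot R V C S nh r b j i <= Ftot R V C S nh r a j i.
Proof. by move=> ha hb hab; apply: ler_sum => k _; apply: flow_mono. Qed.

Lemma Ftot_DR (a b : I -> R) m eps j i : inbox R I a -> inbox R I b -> vle R I a b ->
  0 <= eps -> inbox R I (addcoord R I a m eps) -> inbox R I (addcoord R I b m eps) ->
  Ftot R V C S nh r b j i - Ftot R V C S nh r (addcoord R I b m eps) j i <=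
  Ftot R V C S nh r a j i - Ftot R V C S nh r (addcoord R I a m eps) j i.
Proof.
by move=> *; rewrite /Ftot -!sumrB; apply: ler_sum => k _; apply: flow_DR.
Qed.

End Net.
End Aux.

Theorem lemma1 (R : realType) (V C : finType) (E : rel V)
  (S : C -> {set V}) (nh : C -> V -> V) (r : V -> C -> R)
  (D : V -> V -> R -> R) (Bc : V -> R -> R)
  (hEsym : forall i j, E i j -> E j i)
  (hSne : forall k, S k != finset.set0)
  (hr : forall v k, 0 <= r v k)
  (hnh : forall k i, i \notin S k -> E i (nh k i))
  (hpath_end : forall k v, last v (pth V C S nh k v) \in S k)
  (hpath_loopfree : forall k v, uniq (pth V C S nh k v))
  (hD : forall i j, E i j -> cost_fun R (D i j))
  (hB : forall i, cost_fun R (Bc i)) :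
  [/\ nonneg_on_box R (Idx V C S) (Aobj R V C E S nh r D),
      nondecr_on_box R (Idx V C S) (Aobj R V C E S nh r D),
      DR_submodular R (Idx V C S) (Aobj R V C E S nh r D)
    & convex_on_box R (Idx V C S) (Bobj R V C S Bc)].
Proof.
set I := Idx V C S.
have zbox : inbox R I (yzero R V C S) by move=> m; rewrite /yzero lexx ler01.
have Tmono : forall a b : I -> R, inbox R I a -> inbox R I b -> vle R I a b ->
    Tcost R V C E S nh r D b <= Tcost R V C E S nh r D a.
  move=> a b ha hb hab; apply: ler_sum => e he.
  case: (hD _ _ he) => _ inc _ _.
  by apply: inc; [apply: Ftot_ge0 | apply: Ftot_mono].
split.
- move=> y hy; rewrite /Aobj subr_ge0; apply: Tmono => // m.
  by rewrite /yzero; case/andP: (hy m).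
- move=> a b ha hb hab; have := Tmono a b ha hb hab; rewrite /Aobj; lra.
- move=> a b ha hb hab m eps he ha' hb'.
  have hab' : vle R I (addcoord R I a m eps) (addcoord R I b m eps).
    by move=> m'; rewrite /addcoord lerD2r.
  have haa : forall y : I -> R, vle R I y (addcoord R I y m eps).
    by move=> y m'; rewrite /addcoord lerDl; case: eqP.
  have key : Tcost R V C E S nh r D b - Tcost R V C E S nh r D (addcoord R I b m eps) <=
             Tcost R V C E S nh r D a - Tcost R V C E S nh r D (addcoord R I a m eps).
    rewrite /Tcost -!sumrB; apply: ler_sum => e hE.
    apply: (@D_DR R _ (hD _ _ hE)).
    + exact: Ftot_ge0.
    + exact: Ftot_mono.
    + exact: Ftot_mono.
    + exact: Ftot_mono.
    + exact: Ftot_DR.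
  rewrite /Aobj; lra.
- move=> a b t ha hb t0 t1; rewrite /Bobj.
  have Y0 : forall (y : I -> R) i, inbox R I y -> 0 <= Ycache R V C S y i.
    by move=> y i hy; apply: sumr_ge0 => m _; case/andP: (hy m).
  rewrite !mulr_sumr -big_split /=; apply: ler_sum => i _.
  have -> : Ycache R V C S (fun m => t * a m + (1 - t) * b m) i =
            t * Ycache R V C S a i + (1 - t) * Ycache R V C S b i.
    by rewrite /Ycache big_split /= -!mulr_sumr.
  case: (hB i) => _ _ cvx _; apply: cvx => //; exact: Y0.
Qed.
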